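(* Let $\mathcal{P}$ be a set of probability distributions on $\mathbb{N}$ with associated i.i.d. model class $\mathcal{P}^\infty$, let $\eta>0$ and $\Pi_0\in\mathbb{R}^+$. An insurer with initial capital $\Pi_0$ can find an insurance scheme $(\tau,\Pi)$ such that, for every $p\in\mathcal{P}^\infty$, the probability under $p$ that $(\tau,\Pi)$ never goes bankrupt is bigger than $1-\eta$, if and only if there is a loss domination scheme $\Phi$ such that for every $p\in\mathcal{P}^\infty$ the probability under $p$ that $\Phi$ goes bankrupt is less than $\eta$.
   Context: Losses $X_1,X_2,\ldots\in\mathbb{N}=\{0,1,2,\ldots\}$; $\mathcal{P}^\infty$ is the set of i.i.d. measures on $\mathbb{N}^\infty$ whose one-dimensional marginals form $\mathcal{P}$. $\mathbb{N}^*$ is the set of finite sequences over $\mathbb{N}$ (including the empty sequence), $x^n=x_1,\ldots,x_n$, $\mathbb{R}^+$ the nonnegative reals. An insurance scheme is a pair $(\tau,\Pi)$ with $\tau:\mathbb{N}^*\to\{0,1\}$ such that $\tau(x_1,\ldots,x_n)=1\Rightarrow\tau(x_1,\ldots,x_{n+1})=1$ and $p(\sup_n\tau(X^n)=1)=1$ for all $p\in\mathcal{P}^\infty$, and $\Pi:\mathbb{N}^*\to\mathbb{R}^+$ with $\Pi(x^n)=0$ when $\tau(x^n)=0$; it goes bankrupt if $\Pi_0+\sum_{i=1}^n(\Pi(X^{i-1})-X_i)\mathbf{1}(\tau(X^{i-1})=1)<0$ for some $n\ge1$. A loss domination scheme is a map $\Phi:\mathbb{N}^*\to\mathbb{R}^+\cup\{\infty\}$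 such that $\Phi(x_1,\ldots,x_n)<\infty\Rightarrow\Phi(x_1,\ldots,x_{n+1})<\infty$ for all $x^n$, and $p(\inf_{n\ge1}\Phi(X^n)<\infty)=1$ for all $p\in\mathcal{P}^\infty$. $\Phi$ goes bankrupt if $\Phi(X^{n-1})<X_n$ for some $n\ge1$. *)

(* Defs.v *)
From HB Require Import structures.
From mathcomp Require Import all_boot all_order all_algebra.
From mathcomp Require Import all_classical all_reals all_analysis.
Set Implicit Arguments. Unset Strict Implicit. Unset Printing Implicit Defensive.
Import Order.TTheory GRing.Theory Num.Theory.
Local Open Scope classical_set_scope.
Local Open Scope ring_scope.

(* Sample paths: omega : nat -> nat, with X_{i+1} = omega i (0-indexed). *)
Definition cyl (s : seq nat) : set (nat -> nat) :=
  [set w | forall i, (i < size s)%N -> w i = nth 0%N s i].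

Definition cylinders : set (set (nat -> nat)) := [set cyl s | s in [set: seq nat]].

(* N^infty with the product sigma-algebra (generated by cylinders). *)
Definition seqT := g_sigma_algebraType cylinders.

Definition prefix (w : nat -> nat) (n : nat) : seq nat := mkseq w n.

Definition is_pmf (R : realType) (p : nat -> R) : Prop :=
  (forall k, 0 <= p k) /\ (\sum_(0 <= k <oo) (p k)%:E = 1)%E.

Definition iid_of (R : realType) (p : nat -> R) (P : probability seqT R) : Prop :=
  forall s : seq nat, P (cyl s) = (\prod_(x <- s) p x)%:E.

Definition in_iid_class (R : realType) (calP : set (nat -> R))
  (P : probability seqT R) : Prop :=
  exists2 p, calP p & iid_of p P.

Definition insurance_scheme (R : realType) (calP : set (nat -> R))
  (tau : seq nat -> bool) (Pi : seq nat -> R) : Prop :=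
  [/\ (forall s x, tau s -> tau (rcons s x)),
      (forall P : probability seqT R, in_iid_class calP P ->
         P [set w | exists n, tau (prefix w n)] = 1%E),
      (forall s, 0 <= Pi s) &
      (forall s, ~~ tau s -> Pi s = 0)].

Definition ins_bankrupt (R : realType) (Pi0 : R)
  (tau : seq nat -> bool) (Pi : seq nat -> R) : set (nat -> nat) :=
  [set w | exists n, (1 <= n)%N /\
     Pi0 + \sum_(1 <= i < n.+1)
        (if tau (prefix w i.-1) then Pi (prefix w i.-1) - (w i.-1)%:R else 0) < 0].

Definition loss_domination (R : realType) (calP : set (nat -> R))
  (Phi : seq nat -> \bar R) : Prop :=
  [/\ (forall s, (0 <= Phi s)%E),
      (forall s, Phi s != -oo%E),
      (forall s x, Phi s != +oo%E -> Phi (rcons s x) != +oo%E) &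
      (forall P : probability seqT R, in_iid_class calP P ->
         P [set w | exists n, (1 <= n)%N /\ Phi (prefix w n) != +oo%E] = 1%E)].

Definition ld_bankrupt (R : realType) (Phi : seq nat -> \bar R) : set (nat -> nat) :=
  [set w | exists n, (1 <= n)%N /\ (Phi (prefix w n.-1) < (w n.-1)%:R%:E)%E].

(* Main.v *)
Require Import Defs.
From mathcomp Require Import all_boot all_order all_algebra.
From mathcomp Require Import all_classical all_reals all_analysis.
From mathcomp Require Import lra.
Import Order.TTheory GRing.Theory Num.Theory.
Local Open Scope classical_set_scope.
Local Open Scope ring_scope.
Set Implicit Arguments. Unset Strict Implicit.

Lemma cyl_meas (s : seq nat) : measurable (cyl s : set seqT).
Proof. apply: sub_gen_smallest. by exists s. Qed.

Lemma prefix_cyl (w : nat -> nat) s : cyl s w -> Defs.prefix w (size s) = s.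
Proof.
move=> h; apply: (@eq_from_nth _ 0%N); first by rewrite size_mkseq.
by move=> i; rewrite size_mkseq => hi; rewrite nth_mkseq // h.
Qed.

Lemma cyl_prefix (w : nat -> nat) n : cyl (Defs.prefix w n) w.
Proof. by move=> i; rewrite size_mkseq => hi; rewrite nth_mkseq. Qed.

Lemma meas_prefix (Q : nat -> seq nat -> Prop) :
  measurable ([set w | exists n, Q n (Defs.prefix w n)] : set seqT).
Proof.
have -> : ([set w | exists n, Q n (Defs.prefix w n)] : set seqT) =
  \bigcup_n \bigcup_(k in [set k | exists s, unpickle k = Some s /\ size s = n /\ Q n s])
     cyl (odflt [::] (unpickle k)).
  apply/seteqP; split => w.
    move=> [n hn]; exists n => //; exists (pickle (Defs.prefix w n)).
      by exists (Defs.prefix w n); rewrite (@pickleK (seq nat)) size_mkseq.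
    rewrite (@pickleK (seq nat)); apply: cyl_prefix.
  move=> [n _ [k [s [hk [hs hq]]]] hc]; rewrite hk in hc.
  by exists n; rewrite -hs prefix_cyl // hs.
apply: bigcup_measurable => n _; apply: bigcup_measurable => k _.
exact: cyl_meas.
Qed.

Section Cap.
Variable R : realType.

Fixpoint capr (Pi0 : R) (tau : seq nat -> bool) (Pi : seq nat -> R) (r : seq nat) : R :=
  match r with
  | [::] => Pi0
  | x :: r' => capr Pi0 tau Pi r' + (if tau (rev r') then Pi (rev r') - x%:R else 0)
  end.

Lemma prefixS (w : nat -> nat) n : Defs.prefix w n.+1 = rcons (Defs.prefix w n) (w n).
Proof. exact: mkseqS. Qed.

Lemma sum_cap Pi0 tau Pi (w : nat -> nat) n :
  Pi0 + \sum_(1 <= i < n.+1)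
        (if tau (Defs.prefix w i.-1) then Pi (Defs.prefix w i.-1) - (w i.-1)%:R else 0)
  = capr Pi0 tau Pi (rev (Defs.prefix w n)).
Proof.
elim: n => [|n IH]; first by rewrite big_geq // addr0.
rewrite big_nat_recr //= addrA IH prefixS rev_rcons /= revK.
by [].
Qed.

Lemma ins_bankruptE Pi0 tau Pi :
  ins_bankrupt Pi0 tau Pi =
  [set w | exists n, (1 <= n)%N /\ capr Pi0 tau Pi (rev (Defs.prefix w n)) < 0].
Proof.
by apply/seteqP; split => w [n [h1 h2]]; exists n; split => //; move: h2; rewrite sum_cap.
Qed.

Lemma prob_real (P : probability seqT R) (A : set seqT) :
  measurable A -> exists r : R, [/\ P A = r%:E, 0 <= r & r <= 1].
Proof.
move=> hA; have h1 := probability_le1 P hA; have h0 := measure_ge0 P A.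
have hf : P A \is a fin_num by rewrite ge0_fin_numE // (le_lt_trans h1) ?ltey.
exists (fine (P A)); split; [by rewrite fineK | by rewrite fine_ge0 | by rewrite -lee_fin fineK].
Qed.

Lemma max_add (c p : R) : c + Num.max 0 (p - c) = Num.max c p.
Proof.
by rewrite addr_maxr addr0 addrC subrK.
Qed.
End Cap.

Lemma ld_bankruptE (R : realType) (Phi : seq nat -> \bar R) :
  ld_bankrupt Phi = [set w | exists n, (1 <= n)%N /\
     exists s' x, Defs.prefix w n = rcons s' x /\ (Phi s' < x%:R%:E)%E].
Proof.
apply/seteqP; split => w [n [h1 h2]]; exists n; split => //.
  case: n h1 h2 => // m _ h2; exists (Defs.prefix w m), (w m).
  by rewrite prefixS.
case: n h1 h2 => // m _ [s' [x [e h]]]; move: e; rewrite prefixS => /rcons_inj [-> ->].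
exact: h.
Qed.

Lemma meas_ld (R : realType) (Phi : seq nat -> \bar R) :
  measurable (ld_bankrupt Phi : set seqT).
Proof.
rewrite ld_bankruptE.
exact: (meas_prefix (fun n s => (1 <= n)%N /\
     exists s' x, s = rcons s' x /\ (Phi s' < x%:R%:E)%E)).
Qed.

Lemma meas_ins (R : realType) Pi0 tau (Pi : seq nat -> R) :
  measurable (ins_bankrupt Pi0 tau Pi : set seqT).
Proof.
rewrite ins_bankruptE.
exact: (meas_prefix (fun n s => (1 <= n)%N /\ capr Pi0 tau Pi (rev s) < 0)).
Qed.

Lemma dir1 (R : realType) (calP : set (nat -> R)) (eta Pi0 : R)
  (tau : seq nat -> bool) (Pi : seq nat -> R) :
  insurance_scheme calP tau Pi ->
  (forall P : probability seqT R, in_iid_class calP P ->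
       (1 - eta)%:E < P (~` ins_bankrupt Pi0 tau Pi))%E ->
  (exists Phi : seq nat -> \bar R,
     loss_domination calP Phi /\
     forall P : probability seqT R, in_iid_class calP P ->
       (P (ld_bankrupt Phi) < eta%:E)%E).
Proof.
move=> [hmon hprob hge0 hz] hbk.
pose Phi s := if tau s then (Num.max 0 (capr Pi0 tau Pi (rev s) + Pi s))%:E else +oo%E.
have PhiE s : (Phi s != +oo%E) = tau s by rewrite /Phi; case: (tau s).
exists Phi; split; first split.
- by move=> s; rewrite /Phi; case: (tau s) => //; rewrite lee_fin le_max lexx.
- by move=> s; rewrite /Phi; case: (tau s).
- by move=> s x; rewrite !PhiE; apply: hmon.
- move=> P hP; rewrite -(hprob P hP); congr (P _).
  apply/seteqP; split => w /=.
    by move=> [n [_ h]]; exists n; rewrite -PhiE.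
  move=> [n h]; exists n.+1; split => //; rewrite PhiE prefixS; exact: hmon.
move=> P hP.
have hsub : ld_bankrupt Phi `<=` ins_bankrupt Pi0 tau Pi.
  move=> w [n [hn h]]; case: n hn h => // m _ h; rewrite ins_bankruptE; exists m.+1; split => //.
  move: h; rewrite /= /Phi prefixS rev_rcons /= revK.
  case: (tau (Defs.prefix w m)) => //; rewrite lte_fin => h.
  rewrite addrA subr_lt0; apply: le_lt_trans h; by rewrite le_max lexx orbT.
have h1 := hbk P hP.
have [a [Ea a0 a1]] := prob_real P (meas_ins Pi0 tau Pi).
have [b [Eb b0 b1]] := prob_real P (meas_ld Phi).
have hab : (P (ld_bankrupt Phi) <= P (ins_bankrupt Pi0 tau Pi))%E.
  apply: le_measure; [rewrite inE; exact: meas_ld | rewrite inE; exact: meas_ins | exact: hsub].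
move: h1 hab; rewrite probability_setC; last exact: meas_ins.
rewrite Ea Eb -EFinB !lte_fin lee_fin => h1 hab.
lra.
Qed.

Fixpoint cap2 (R : realType) (Pi0 : R) (Phi : seq nat -> \bar R) (r : seq nat) : R :=
  match r with
  | [::] => Pi0
  | x :: r' => if Phi (rev r') != +oo%E
               then Num.max (cap2 Pi0 Phi r') (fine (Phi (rev r'))) - x%:R
               else cap2 Pi0 Phi r'
  end.

Lemma dir2 (R : realType) (calP : set (nat -> R)) (eta Pi0 : R)
  (hPi0 : 0 <= Pi0) (Phi : seq nat -> \bar R) :
  loss_domination calP Phi ->
  (forall P : probability seqT R, in_iid_class calP P ->
       (P (ld_bankrupt Phi) < eta%:E)%E) ->
  (exists (tau : seq nat -> bool) (Pi : seq nat -> R),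
     insurance_scheme calP tau Pi /\
     forall P : probability seqT R, in_iid_class calP P ->
       (1 - eta)%:E < P (~` ins_bankrupt Pi0 tau Pi))%E.
Proof.
move=> [hge0 hninf hmon hprob] hbk.
pose tau s := Phi s != +oo%E.
pose Pi s := if tau s then Num.max 0 (fine (Phi s) - cap2 Pi0 Phi (rev s)) else 0.
have capE r : capr Pi0 tau Pi r = cap2 Pi0 Phi r.
  elim: r => [//|x r IH] /=; rewrite IH /Pi /tau revK.
  case: (Phi (rev r) != +oo%E); last by rewrite addr0.
  by rewrite addrA max_add.
exists tau, Pi; split; first split.
- exact: hmon.
- move=> P hP; rewrite -(hprob P hP); congr (P _).
  apply/seteqP; split => w /=.
    move=> [n h]; exists n.+1; split => //; rewrite prefixS; exact: hmon.
  by move=> [n [_ h]]; exists n.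
- by move=> s; rewrite /Pi; case: ifP => // _; rewrite le_max lexx.
- by move=> s; rewrite /Pi => /negbTE ->.
move=> P hP.
have hsub : ins_bankrupt Pi0 tau Pi `<=` ld_bankrupt Phi.
  rewrite ins_bankruptE => w [n [_]]; rewrite capE.
  elim: n => [|n IH]; first by rewrite /= ltNge hPi0.
  rewrite prefixS rev_rcons /= revK.
  case: ifP => ht; last exact: IH.
  case: (ltP (cap2 Pi0 Phi (rev (Defs.prefix w n))) 0) => hc; first by move=> _; exact: IH.
  rewrite subr_lt0 => hm; exists n.+1; split => //=.
  have hf : Phi (Defs.prefix w n) \is a fin_num by rewrite fin_numE hninf ht.
  rewrite -(fineK hf) lte_fin; apply: le_lt_trans hm.
  by rewrite le_max lexx orbT.
have h1 := hbk P hP.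
have [a [Ea a0 a1]] := prob_real P (meas_ins Pi0 tau Pi).
have [b [Eb b0 b1]] := prob_real P (meas_ld Phi).
have hab : (P (ins_bankrupt Pi0 tau Pi) <= P (ld_bankrupt Phi))%E.
  apply: le_measure; [rewrite inE; exact: meas_ins | rewrite inE; exact: meas_ld | exact: hsub].
rewrite probability_setC; last exact: meas_ins.
move: h1 hab; rewrite Ea Eb -EFinB !lte_fin lee_fin => h1 hab.
lra.
Qed.

Theorem mainTheorem2 (R : realType) (calP : set (nat -> R))
  (hP : forall p, calP p -> is_pmf p) (eta Pi0 : R)
  (heta : 0 < eta) (hPi0 : 0 <= Pi0) :
  (exists (tau : seq nat -> bool) (Pi : seq nat -> R),
     insurance_scheme calP tau Pi /\
     forall P : probability seqT R, in_iid_class calP P ->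
       (1 - eta)%:E < P (~` ins_bankrupt Pi0 tau Pi))%E
  <->
  (exists Phi : seq nat -> \bar R,
     loss_domination calP Phi /\
     forall P : probability seqT R, in_iid_class calP P ->
       (P (ld_bankrupt Phi) < eta%:E)%E).
Proof.
split.
- by move=> [tau [Pi [hs hb]]]; exact: dir1 hs hb.
- by move=> [Phi [hl hb]]; exact: (@dir2 R calP eta Pi0 hPi0 Phi hl hb).
Qed.
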